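(* Suppose $f\colon[0,\infty)\to[0,\infty)$ satisfies (M), (S) and (L). For $k>0$ set $g(\sigma)=F^{-1}(\sigma^k)$ for $\sigma\in(0,F_0^{1/k})$. Then there exists $\sigma_*>0$ such that $g$ is convex on $(0,\sigma_* )$.
   Context: (M) $f$ continuous, nondecreasing, $f(u)>0$ for $u>0$. (S) there is $\tau_0>0$ with $f\in C^1([\tau_0,\infty))$ and $\int_{\tau_0}^\infty ds/f(s)<\infty$. $F(u)=\int_u^\infty ds/f(s)$ for $u>0$, $F_0=\lim_{u\to0}F(u)$ (possibly $\infty$); $F^{-1}\colon(0,F_0)\to(0,\infty)$ is the inverse of $F$. (L) $q_f:=\lim_{u\to\infty}f'(u)F(u)$ exists and is finite. *)

(* Defs.v *)
From Stdlib Require Import Reals Lra.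
From Coquelicot Require Import Coquelicot.
Open Scope R_scope.

Definition Fint (f : R -> R) (u : R) : R :=
  RInt_gen (fun s => / f s) (at_point u) (Rbar_locally p_infty).

Definition convex_on_oo (g : R -> R) (a b : R) : Prop :=
  forall x y t, a < x < b -> a < y < b -> 0 <= t <= 1 ->
    g (t * x + (1 - t) * y) <= t * g x + (1 - t) * g y.

(* Main.v *)
Require Import Defs.
From Stdlib Require Import Reals Lra.
From Coquelicot Require Import Coquelicot.
Open Scope R_scope.

Lemma convex_from_chord (g : R -> R) (a b : R) :
  (forall x z y, a < x -> x < z -> z < y -> y < b ->
     (g z - g x) * (y - z) <= (g y - g z) * (z - x)) ->
  convex_on_oo g a b.
Proof.
  intros Hc.
  assert (H1 : forall x y t, a < x < b -> a < y < b -> 0 <= t <= 1 -> x < y ->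
    g (t * x + (1 - t) * y) <= t * g x + (1 - t) * g y).
  { intros x y t Hx Hy Ht Hxy.
    destruct (Rle_lt_or_eq_dec 0 t (proj1 Ht)) as [Ht0|Ht0].
    - destruct (Rle_lt_or_eq_dec t 1 (proj2 Ht)) as [Ht1|Ht1].
      + set (z := t * x + (1 - t) * y).
        assert (Hz1 : x < z) by (unfold z; nra).
        assert (Hz2 : z < y) by (unfold z; nra).
        specialize (Hc x z y (proj1 Hx) Hz1 Hz2 (proj2 Hy)).
        replace (y - z) with (t * (y - x)) in Hc by (unfold z; ring).
        replace (z - x) with ((1 - t) * (y - x)) in Hc by (unfold z; ring).
        destruct (Rle_or_lt (g z) (t * g x + (1 - t) * g y)) as [H|H]; auto.
        exfalso.
        assert (0 < (g z - t * g x - (1 - t) * g y) * (y - x)) by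
          (apply Rmult_lt_0_compat; lra).
        nra.
      + subst t. replace (1 * x + (1 - 1) * y) with x by ring. lra.
    - subst t. replace (0 * x + (1 - 0) * y) with y by ring. lra. }
  intros x y t Hx Hy Ht.
  destruct (Rtotal_order x y) as [Hxy|[Hxy|Hxy]].
  - now apply H1.
  - subst y. replace (t * x + (1 - t) * x) with x by ring. lra.
  - replace (t * x + (1 - t) * y) with ((1 - t) * y + (1 - (1 - t)) * x) by ring.
    replace (t * g x + (1 - t) * g y) with ((1 - t) * g y + (1 - (1 - t)) * g x) by ring.
    apply H1; auto; lra.
Qed.
Lemma F_facts (f : R -> R) (t0 : R)
  (Hcont : forall u, 0 < u -> continuous f u)
  (Hpos : forall u, 0 < u -> 0 < f u)
  (Ht0 : 0 < t0)
  (HI : ex_RInt_gen (fun s => / f s) (at_point t0) (Rbar_locally p_infty)) :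
  (forall u, 0 < u -> is_derive (Fint f) u (- / f u)) /\
  (forall u v, 0 < u -> u <= v -> Fint f v <= Fint f u) /\
  (forall u, 0 < u -> 0 < Fint f u).
Proof.
  assert (Hci : forall x, 0 < x -> continuous (fun s => / f s) x).
  { intros x Hx. apply (continuous_comp f (fun y => / y)). now apply Hcont.
    apply continuous_Rinv. specialize (Hpos x Hx). lra. }
  assert (Hex : forall a b, 0 < a -> 0 < b -> ex_RInt (fun s => / f s) a b).
  { intros a b Ha Hb. apply (ex_RInt_continuous (V := R_CompleteNormedModule)). intros z Hz. apply Hci.
    destruct Hz as [Hz _]. apply Rlt_le_trans with (2 := Hz).
    now apply Rmin_glb_lt. }
  set (I := RInt_gen (fun s => / f s) (at_point t0) (Rbar_locally p_infty)).
  assert (HIc : is_RInt_gen (fun s => / f s) (at_point t0) (Rbar_locally p_infty) I).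
  { unfold I; apply (RInt_gen_correct (V := R_CompleteNormedModule)); auto. }
  assert (HFis : forall u, 0 < u -> is_RInt_gen (fun s => / f s) (at_point u) (Rbar_locally p_infty)
             (RInt (fun s => / f s) u t0 + I)).
  { intros u Hu. apply (is_RInt_gen_Chasles (V := R_NormedModule) (fun s => / f s) t0); auto.
    apply is_RInt_gen_at_point. apply (RInt_correct (V:=R_CompleteNormedModule)). now apply Hex. }
  assert (HFe : forall u, 0 < u -> Fint f u = RInt (fun s => / f s) u t0 + I).
  { intros u Hu. unfold Fint. apply (is_RInt_gen_unique (V:=R_CompleteNormedModule)). now apply HFis. }
  assert (HFdiff : forall u v, 0 < u -> 0 < v -> Fint f u - Fint f v = RInt (fun s => / f s) u v).
  { intros u v Hu Hv. rewrite (HFe u Hu), (HFe v Hv).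
    rewrite <- (RInt_Chasles (fun s => / f s) u v t0); auto.
    unfold plus; simpl. ring. }
  assert (HFmono : forall u v, 0 < u -> u <= v -> Fint f v <= Fint f u).
  { intros u v Hu Huv.
    assert (0 <= RInt (fun s => / f s) u v).
    { apply RInt_ge_0; auto. apply Hex; lra. intros x Hx.
      apply Rlt_le, Rinv_0_lt_compat, Hpos; lra. }
    rewrite <- HFdiff in H; lra. }
  split; [|split]; auto.
  - intros u Hu.
    apply (is_derive_ext_loc (fun a => RInt (fun s => / f s) a t0 + I)).
    { exists (mkposreal u Hu). intros y Hy. simpl in Hy.
      unfold ball in Hy; simpl in Hy; unfold AbsRing_ball, abs, minus, plus, opp in Hy; simpl in Hy.
      rewrite HFe; auto. apply Rabs_def2 in Hy. lra. }
    replace (- / f u) with (plus (opp (/ f u)) 0).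
    2: { unfold plus, opp; simpl; ring. }
    apply (is_derive_plus (fun a => RInt (fun s => / f s) a t0) (fun _ => I)).
    2: apply (is_derive_const (K:=R_AbsRing) (V:=R_NormedModule)).
    apply (is_derive_RInt' (fun s => / f s) _ u t0).
    2: now apply Hci.
    exists (mkposreal u Hu). intros y Hy.
    unfold ball in Hy; simpl in Hy; unfold AbsRing_ball, abs, minus, plus, opp in Hy; simpl in Hy.
    apply Rabs_def2 in Hy. apply (RInt_correct (V:=R_CompleteNormedModule)), Hex; lra.
  - intros u Hu.
    assert (H1 : 0 <= Fint f (u + 1)).
    { assert (Hn := RInt_gen_norm (V:=R_CompleteNormedModule) (Fa := at_point (u+1)) (Fb := Rbar_locally p_infty) (fun s => / f s) (fun s => / f s) (Fint f (u+1)) (Fint f (u+1))).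
      assert (Hx : is_RInt_gen (fun s => / f s) (at_point (u+1)) (Rbar_locally p_infty) (Fint f (u+1))).
      { rewrite HFe by lra. apply HFis; lra. }
      assert (Hn' : norm (Fint f (u+1)) <= Fint f (u+1)).
      { apply Hn; auto.
        - exists (fun a => a = u + 1) (fun b => u + 1 < b).
          + unfold at_point; auto.
          + exists (u+1). auto.
          + intros a b Ha Hb. simpl. subst; lra.
        - exists (fun a => a = u + 1) (fun b => True).
          + unfold at_point; auto.
          + exists 0. auto.
          + intros a b Ha Hb. simpl. subst. intros x Hx0.
            assert (0 < / f x) by (apply Rinv_0_lt_compat, Hpos; destruct Hx0; lra).
            unfold norm; simpl; unfold abs; simpl. rewrite Rabs_pos_eq; lra. }
      unfold norm in Hn'; simpl in Hn'; unfold abs in Hn'; simpl in Hn'.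
      pose proof (Rabs_pos (Fint f (u+1))). pose proof (Rle_abs (- Fint f (u+1))).
      rewrite Rabs_Ropp in H0. lra. }
    assert (H2 : 0 < RInt (fun s => / f s) u (u+1)).
    { apply RInt_gt_0; [lra| |].
      - intros x Hx. apply Rinv_0_lt_compat, Hpos; lra.
      - intros x Hx. apply Hci; lra. }
    rewrite <- HFdiff in H2 by lra. lra.
Qed.

Theorem lemma3p2 (f : R -> R) (k : R) (F0 : Rbar) (Finv : R -> R)
  (* (M) *)
  (Hnonneg : forall u, 0 <= u -> 0 <= f u)
  (Hcont0 : filterlim f (at_right 0) (locally (f 0)))
  (Hcont : forall u, 0 < u -> continuous f u)
  (Hmono : forall u v, 0 <= u -> u <= v -> f u <= f v)
  (Hpos : forall u, 0 < u -> 0 < f u)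
  (* (S) *)
  (HS : exists tau0, 0 < tau0 /\
          (forall u, tau0 < u -> ex_derive f u /\ continuous (Derive f) u) /\
          ex_RInt_gen (fun s => / f s) (at_point tau0) (Rbar_locally p_infty))
  (* F_0 = lim_{u -> 0+} F(u) *)
  (HF0 : filterlim (Fint f) (at_right 0) (Rbar_locally F0))
  (* F^{-1} : (0, F_0) -> (0, oo) is the inverse of F *)
  (HFinv : forall t, 0 < t -> Rbar_lt (Finite t) F0 ->
             0 < Finv t /\ Fint f (Finv t) = t)
  (* (L) *)
  (HL : exists q : R,
          filterlim (fun u => Derive f u * Fint f u) (Rbar_locally p_infty) (locally q))
  (Hk : 0 < k) :
  exists sigma_s : R, 0 < sigma_s /\
    (forall sigma, 0 < sigma < sigma_s -> Rbar_lt (Finite (Rpower sigma k)) F0) /\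
    convex_on_oo (fun sigma => Finv (Rpower sigma k)) 0 sigma_s.
Proof.
  destruct HS as [t0 [Ht0 [Hder HI]]]. destruct HL as [q Hq].
  destruct (F_facts f t0 Hcont Hpos Ht0 HI) as [HFd [HFm HFp]].
  assert (Hev : forall eps : posreal, exists M, forall u, M < u ->
            Rabs (Derive f u * Fint f u - q) < eps).
  { intros eps. apply filterlim_locally with (eps := eps) in Hq.
    destruct Hq as [M HM]. exists M. intros u Hu. apply HM in Hu.
    exact Hu. }
  assert (Hh : forall x, t0 < x ->
     is_derive (fun u => f u * Fint f u) x (Derive f x * Fint f x - 1)).
  { intros x Hx. auto_derive.
    - split. apply Hder; lra. split; [|exact I]. eexists; apply HFd; lra.
    - change (fun x0 : R => Fint f x0) with (Fint f).
      change (fun x0 : R => f x0) with f.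
      rewrite (is_derive_unique _ _ _ (HFd x ltac:(lra))).
      assert (0 < f x) by (apply Hpos; lra). field. lra. }
  assert (Hq1 : 1 <= q).
  { destruct (Rle_or_lt 1 q) as [H|H]; auto. exfalso.
    assert (Heps : 0 < (1 - q) / 2) by lra.
    destruct (Hev (mkposreal _ Heps)) as [M HM]. simpl in HM.
    set (A := Rmax M t0 + 1).
    assert (HA1 : M < A) by (unfold A; pose proof (Rmax_l M t0); lra).
    assert (HA2 : t0 < A) by (unfold A; pose proof (Rmax_r M t0); lra).
    set (h := fun u => f u * Fint f u).
    assert (Hh0 : forall u, t0 < u -> 0 <= h u).
    { intros u Hu. unfold h. apply Rmult_le_pos.
      apply Rlt_le, Hpos; lra. apply Rlt_le, HFp; lra. }
    set (B := A + (h A + 1) / ((1 - q) / 2)).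
    assert (HAB : A < B).
    { unfold B. pose proof (Hh0 A HA2).
      assert (0 < (h A + 1) / ((1 - q) / 2)) by (apply Rdiv_lt_0_compat; lra). lra. }
    destruct (MVT_gen h A B (fun x => Derive f x * Fint f x - 1)) as [c [Hc HcE]].
    { intros x Hx. rewrite Rmin_left in Hx by lra. rewrite Rmax_right in Hx by lra.
      apply Hh; lra. }
    { intros x Hx. rewrite Rmin_left in Hx by lra. rewrite Rmax_right in Hx by lra.
      apply continuity_pt_filterlim. apply (ex_derive_continuous (K:=R_AbsRing) (V:=R_NormedModule)).
      eexists. apply Hh; lra. }
    rewrite Rmin_left in Hc by lra. rewrite Rmax_right in Hc by lra.
    assert (Hc1 := HM c ltac:(lra)). apply Rabs_def2 in Hc1.
    pose proof (Hh0 B ltac:(lra)).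
    assert (Hd : (Derive f c * Fint f c - 1) * (B - A) <= - ((1 - q) / 2) * (B - A)).
    { apply Rmult_le_compat_r; lra. }
    assert (HBA : ((1 - q) / 2) * (B - A) = h A + 1).
    { unfold B. field. lra. }
    lra. }
  assert (Hk' : 0 < / k) by (apply Rinv_0_lt_compat; lra).
  destruct (Hev (mkposreal _ Hk')) as [M2 HM2]. simpl in HM2.
  set (U := Rmax M2 t0 + 1).
  assert (HU1 : M2 < U) by (unfold U; pose proof (Rmax_l M2 t0); lra).
  assert (HU2 : t0 < U) by (unfold U; pose proof (Rmax_r M2 t0); lra).
  set (L := fun x => (1/k) * ln (Fint f x) - ln (Fint f x) - ln (f x)).
  set (dL := fun x => - ((1/k - 1) + Derive f x * Fint f x) / (f x * Fint f x)).
  assert (HLd : forall x, U < x -> is_derive L x (dL x)).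
  { intros x Hx. unfold L, dL.
    assert (0 < f x) by (apply Hpos; lra).
    assert (0 < Fint f x) by (apply HFp; lra).
    auto_derive.
    - repeat split; auto. eexists; apply HFd; lra. eexists; apply HFd; lra. apply Hder; lra.
    - change (fun x0 : R => Fint f x0) with (Fint f).
      change (fun x0 : R => f x0) with f.
      rewrite (is_derive_unique _ _ _ (HFd x ltac:(lra))).
      field. split; lra. }
  assert (Hpsi : forall c1 c2, U < c1 -> c1 <= c2 -> exp (L c2) <= exp (L c1)).
  { intros c1 c2 Hc1 Hc12.
    destruct (Rle_lt_or_eq_dec _ _ Hc12) as [Hlt|Heq]; [|subst; lra].
    destruct (MVT_gen L c1 c2 dL) as [c [Hc HcE]].
    { intros x Hx. rewrite Rmin_left in Hx by lra. rewrite Rmax_right in Hx by lra.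
      apply HLd; lra. }
    { intros x Hx. rewrite Rmin_left in Hx by lra. rewrite Rmax_right in Hx by lra.
      apply continuity_pt_filterlim. apply (ex_derive_continuous (K:=R_AbsRing) (V:=R_NormedModule)).
      eexists. apply HLd; lra. }
    rewrite Rmin_left in Hc by lra. rewrite Rmax_right in Hc by lra.
    assert (HdL : dL c <= 0).
    { unfold dL. assert (0 < f c) by (apply Hpos; lra).
      assert (0 < Fint f c) by (apply HFp; lra).
      assert (HM := HM2 c ltac:(lra)). apply Rabs_def2 in HM.
      assert (0 < ((1/k - 1) + Derive f c * Fint f c) / (f c * Fint f c)).
      { apply Rdiv_lt_0_compat. lra. apply Rmult_lt_0_compat; lra. }
      rewrite Ropp_div. lra. }
    assert (HLc : L c2 <= L c1).
    { assert (dL c * (c2 - c1) <= 0).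
      { apply Rmult_le_0_r. lra. lra. }
      lra. }
    destruct (Rle_lt_or_eq_dec _ _ HLc) as [H|H].
    - apply Rlt_le, exp_increasing, H.
    - rewrite H. lra. }
  set (phi := fun x => exp ((1/k) * ln (Fint f x))).
  set (dphi := fun x => - (1/k) * exp (L x)).
  assert (Hphid : forall x, U < x -> is_derive phi x (dphi x)).
  { intros x Hx. unfold phi, dphi, L.
    assert (0 < f x) by (apply Hpos; lra).
    assert (0 < Fint f x) by (apply HFp; lra).
    auto_derive.
    - repeat split; auto. eexists; apply HFd; lra.
    - change (fun x0 : R => Fint f x0) with (Fint f).
      rewrite (is_derive_unique _ _ _ (HFd x ltac:(lra))).
      unfold Rminus. rewrite !exp_plus, !exp_Ropp, !exp_ln by lra.
      field. repeat split; lra. }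
  assert (Hmvt : forall a b, U < a -> a < b ->
            exists c, a <= c <= b /\ phi b - phi a = dphi c * (b - a)).
  { intros a b Ha Hab.
    destruct (MVT_gen phi a b dphi) as [c [Hc HcE]].
    { intros x Hx. rewrite Rmin_left in Hx by lra. rewrite Rmax_right in Hx by lra.
      apply Hphid; lra. }
    { intros x Hx. rewrite Rmin_left in Hx by lra. rewrite Rmax_right in Hx by lra.
      apply continuity_pt_filterlim. apply (ex_derive_continuous (K:=R_AbsRing) (V:=R_NormedModule)).
      eexists. apply Hphid; lra. }
    rewrite Rmin_left in Hc by lra. rewrite Rmax_right in Hc by lra.
    exists c; auto. }
  assert (HFU0 : 0 < Fint f U) by (apply HFp; lra).
  set (sigma_s := Rpower (Fint f U) (1/k)).
  assert (Hss : Rpower sigma_s k = Fint f U).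
  { unfold sigma_s. rewrite Rpower_mult.
    replace (1 / k * k) with 1 by (field; lra). apply Rpower_1; lra. }
  assert (HFU : Rbar_le (Fint f U) F0).
  { apply (filterlim_le (F := at_right 0) (fun _ => Fint f U) (Fint f)); auto.
    - exists (mkposreal U ltac:(lra)). intros x Hx Hx0.
      unfold ball in Hx; simpl in Hx; unfold AbsRing_ball, abs, minus, plus, opp in Hx; simpl in Hx.
      apply Rabs_def2 in Hx. apply HFm; lra.
    - apply filterlim_const. }
  assert (Hg : forall s, 0 < s < sigma_s ->
     U < Finv (Rpower s k) /\ Fint f (Finv (Rpower s k)) = Rpower s k /\
     Rbar_lt (Rpower s k) F0).
  { intros s Hs.
    assert (Hlt : Rpower s k < Fint f U).
    { rewrite <- Hss. apply Rlt_Rpower_l; lra. }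
    assert (Hlt2 : Rbar_lt (Rpower s k) F0).
    { destruct F0; simpl in *; auto. lra. }
    assert (Hp : 0 < Rpower s k) by (unfold Rpower; apply exp_pos).
    destruct (HFinv _ Hp Hlt2) as [H1 H2].
    split; [|split]; auto.
    destruct (Rlt_or_le U (Finv (Rpower s k))) as [H|H]; auto.
    pose proof (HFm _ _ H1 H). lra. }
  assert (Hphig : forall s, 0 < s < sigma_s -> phi (Finv (Rpower s k)) = s).
  { intros s Hs. destruct (Hg s Hs) as [_ [H _]]. unfold phi. rewrite H.
    change (Rpower (Rpower s k) (1/k) = s). rewrite Rpower_mult.
    replace (k * (1 / k)) with 1 by (field; lra). apply Rpower_1; lra. }
  assert (Hdec : forall x z, 0 < x -> x < z -> z < sigma_s ->
     Finv (Rpower z k) < Finv (Rpower x k)).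
  { intros x z Hx Hxz Hz.
    destruct (Hg x ltac:(lra)) as [Ux [Fx _]].
    destruct (Hg z ltac:(lra)) as [Uz [Fz _]].
    destruct (Rlt_or_le (Finv (Rpower z k)) (Finv (Rpower x k))) as [H|H]; auto.
    exfalso. pose proof (HFm (Finv (Rpower x k)) _ ltac:(lra) H). rewrite Fx, Fz in H0.
    pose proof (Rlt_Rpower_l x z k Hk ltac:(lra)). lra. }
  exists sigma_s. split; [unfold sigma_s, Rpower; apply exp_pos|split].
  { intros s Hs. apply Hg; auto. }
  apply convex_from_chord. intros x z y Hx Hxz Hzy Hy.
  set (a := Finv (Rpower y k)). set (b := Finv (Rpower z k)). set (c := Finv (Rpower x k)).
  assert (Hab : a < b) by (apply Hdec; lra).
  assert (Hbc : b < c) by (apply Hdec; lra).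
  assert (Ha : U < a) by (apply Hg; lra).
  assert (Hpa : phi a = y) by (apply Hphig; lra).
  assert (Hpb : phi b = z) by (apply Hphig; lra).
  assert (Hpc : phi c = x) by (apply Hphig; lra).
  destruct (Hmvt a b Ha Hab) as [c1 [Hc1 E1]].
  destruct (Hmvt b c ltac:(lra) Hbc) as [c2 [Hc2 E2]].
  rewrite Hpa, Hpb in E1. rewrite Hpb, Hpc in E2.
  assert (He : exp (L c2) <= exp (L c1)) by (apply Hpsi; lra).
  unfold dphi in E1, E2.
  assert (HP : 0 < (1/k) * ((c - b) * (b - a))).
  { apply Rmult_lt_0_compat. lra. apply Rmult_lt_0_compat; lra. }
  assert (Hy' : y - z = (1/k) * exp (L c1) * (b - a)) by lra.
  assert (Hz' : z - x = (1/k) * exp (L c2) * (c - b)) by lra.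
  rewrite Hy', Hz'.
  assert (0 <= (exp (L c1) - exp (L c2)) * ((1/k) * ((c - b) * (b - a)))).
  { apply Rmult_le_pos; lra. }
  nra.
Qed.
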